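(* Let $0<\alpha<\pi$, let $z\in\mathbb D$, and let $\Omega_j=\omega(z,I_j,\mathbb D)$, $j=1,2,3,4$, where $I_1=(0,\alpha)$, $I_2=(\alpha,\pi)$, $I_3=(\pi,\pi+\alpha)$, $I_4=(\pi+\alpha,2\pi)$ (arcs of the unit circle given by argument ranges). Then \[ \frac{\sin(\pi\Omega_1)\sin(\pi\Omega_3)}{\sin(\pi\Omega_2)\sin(\pi\Omega_4)}=\tan^2\frac{\alpha}{2}. \] Equivalently, with $U=\Omega_1+\Omega_3$, $V=\Omega_1-\Omega_3$, $T=\Omega_4-\Omega_2$, \[ \frac{\sin\frac\pi2(U+V)\,\sin\frac\pi2(U-V)}{\sin\frac\pi2(1-U-T)\,\sin\frac\pi2(1-U+T)}=\tan^2\frac\alpha2 . \]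
   Context: $\mathbb D$ is the open unit disk and $\omega(z,I,\mathbb D)$ denotes the harmonic measure at $z$ of the boundary arc $I\subset\partial\mathbb D$ with respect to $\mathbb D$ (the Poisson integral of the indicator function of $I$). *)

(* Defs.v *)
From Stdlib Require Import Reals.
From Coquelicot Require Import Coquelicot.
Open Scope R_scope.

(* Poisson kernel of the unit disk at z = x + i y, evaluated at e^{it}:
   (1 - |z|^2) / |e^{it} - z|^2. *)
Definition poisson_kernel (x y t : R) : R :=
  (1 - (x ^ 2 + y ^ 2)) / ((cos t - x) ^ 2 + (sin t - y) ^ 2).

(* Harmonic measure omega(z, I, D) of the arc I = {e^{it} : a < t < b}
   (with a <= b, b - a <= 2 pi) at z = x + i y in the unit disk:
   the Poisson integral of the indicator of I,
   (1/(2 pi)) * int_a^b P(z, e^{it}) dt. *)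
Definition harm_meas_arc (x y a b : R) : R :=
  / (2 * PI) * RInt (poisson_kernel x y) a b.

(* Main.v *)
Require Import Defs.
From Stdlib Require Import Reals Lra.
From Coquelicot Require Import Coquelicot.
Open Scope R_scope.

Definition Rf x y t := 1 - x*cos t - y*sin t.
Definition If x y t := x*sin t - y*cos t.
Definition qf x y t := If x y t / Rf x y t.
Definition Ff x y t := t + 2*atan(qf x y t).
Definition Kf x y t := Rf x y t * sqrt (1 + (qf x y t)²).

Lemma RI_sq x y t : (Rf x y t)^2 + (If x y t)^2 = (cos t - x)^2 + (sin t - y)^2.
Proof.
  unfold Rf, If. pose proof (sin2_cos2 t) as H. unfold Rsqr in H.
  transitivity ((cos t - x)^2 + (sin t - y)^2 + (x^2+y^2-1)*((sin t * sin t + cos t * cos t) - 1)).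
  - ring.
  - rewrite H. ring.
Qed.

Lemma Rf_pos x y t : x^2 + y^2 < 1 -> 0 < Rf x y t.
Proof.
  intros Hz. pose proof (sin2_cos2 t) as H. unfold Rsqr in H.
  assert (E : (x*cos t + y*sin t)^2 + (x*sin t - y*cos t)^2 = x^2+y^2).
  { transitivity ((x^2+y^2)*(sin t * sin t + cos t * cos t)); [ring | rewrite H; ring]. }
  unfold Rf.
  assert (Hu : (x*cos t + y*sin t)^2 < 1) by (pose proof (pow2_ge_0 (x*sin t - y*cos t)); lra).
  destruct (Rlt_or_le (x*cos t + y*sin t) 1) as [h|h]; [lra|].
  exfalso. nra.
Qed.

Lemma den_pos x y t : x^2 + y^2 < 1 -> 0 < (cos t - x)^2 + (sin t - y)^2.
Proof.
  intros Hz. rewrite <- RI_sq. pose proof (Rf_pos x y t Hz). nra.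
Qed.

Lemma Ff_deriv x y t : x^2 + y^2 < 1 -> is_derive (Ff x y) t (poisson_kernel x y t).
Proof.
  intros Hz. pose proof (Rf_pos x y t Hz) as HR. pose proof (den_pos x y t Hz) as HD.
  pose proof (RI_sq x y t) as HE.
  unfold Ff, qf. unfold Rf, If in *.
  auto_derive.
  - lra.
  - unfold poisson_kernel. rewrite <- HE.
    pose proof (sin2_cos2 t) as H. unfold Rsqr in H.
    replace (1 - (x^2+y^2)) with
      (2*(1 - x*cos t - y*sin t) - (1 - x*cos t - y*sin t)^2 - (x*sin t - y*cos t)^2)
      by (transitivity (1 - (x^2+y^2)*(sin t * sin t + cos t * cos t)); [ring | rewrite H; ring]).
    change R in t. field. split; lra.
Qed.

Lemma pk_cont x y t : x^2 + y^2 < 1 -> continuous (poisson_kernel x y) t.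
Proof.
  intros Hz. apply (@ex_derive_continuous R_AbsRing R_NormedModule). pose proof (den_pos x y t Hz).
  unfold poisson_kernel. auto_derive. lra.
Qed.

Lemma piO x y a b : x^2 + y^2 < 1 ->
  PI * harm_meas_arc x y a b = (b - a)/2 + atan (qf x y b) - atan (qf x y a).
Proof.
  intros Hz. unfold harm_meas_arc.
  assert (Hi : is_RInt (poisson_kernel x y) a b (minus (Ff x y b) (Ff x y a))).
  { apply (@is_RInt_derive R_CompleteNormedModule); intros; [apply Ff_deriv | apply pk_cont]; exact Hz. }
  rewrite (is_RInt_unique _ _ _ _ Hi). unfold minus, plus, opp; simpl.
  unfold Ff. pose proof PI_RGT_0. field. lra.
Qed.

Lemma sin_formula x y a b : x^2 + y^2 < 1 ->
  sin (PI * harm_meas_arc x y a b) =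
  sin ((b-a)/2) * (1 - (x^2+y^2)) / (Kf x y a * Kf x y b).
Proof.
  intros Hz. rewrite piO by exact Hz.
  pose proof (Rf_pos x y a Hz) as Ha. pose proof (Rf_pos x y b Hz) as Hb.
  assert (ka : 0 < sqrt (1 + (qf x y a)²)) by (apply sqrt_lt_R0; pose proof (Rle_0_sqr (qf x y a)); lra).
  assert (kb : 0 < sqrt (1 + (qf x y b)²)) by (apply sqrt_lt_R0; pose proof (Rle_0_sqr (qf x y b)); lra).
  rewrite sin_minus, sin_plus, cos_plus, !cos_atan, !sin_atan.
  unfold Kf.
  set (m := (a+b)/2). set (be := (b-a)/2).
  assert (Ea : a = m - be) by (unfold m, be; field).
  assert (Eb : b = m + be) by (unfold m, be; field).
  assert (Hm := sin2_cos2 m). assert (Hbe := sin2_cos2 be). unfold Rsqr in Hm, Hbe.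
  assert (Key : sin be * (Rf x y a * Rf x y b + If x y a * If x y b)
              + cos be * (If x y b * Rf x y a - If x y a * Rf x y b)
              = sin be * (1 - (x^2+y^2))).
  { unfold Rf, If. rewrite Ea, Eb, cos_minus, sin_minus, cos_plus, sin_plus.
    transitivity (sin be * (1 - (x^2+y^2)*(sin be * sin be + cos be * cos be))
       - sin be * (x^2+y^2) * (sin be * sin be + cos be * cos be)*(sin m * sin m + cos m * cos m - 1)).
    - ring.
    - rewrite Hm, Hbe. ring. }
  rewrite <- Key. set (sa := sqrt (1 + (qf x y a)²)) in *. set (sb := sqrt (1 + (qf x y b)²)) in *.
  unfold qf. field. repeat split; lra.
Qed.

Lemma Kf_2PI x y : Kf x y (2*PI) = Kf x y 0.
Proof. unfold Kf, qf, Rf, If. rewrite cos_2PI, sin_2PI, cos_0, sin_0. reflexivity. Qed.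

Lemma qf_2PI x y : qf x y (2*PI) = qf x y 0.
Proof. unfold qf, Rf, If. rewrite cos_2PI, sin_2PI, cos_0, sin_0. reflexivity. Qed.

Lemma Kf_pos x y t : x^2 + y^2 < 1 -> 0 < Kf x y t.
Proof.
  intros Hz. unfold Kf. apply Rmult_lt_0_compat. apply Rf_pos, Hz.
  apply sqrt_lt_R0; pose proof (Rle_0_sqr (qf x y t)); lra.
Qed.

Theorem lemma3p1 (alpha x y : R)
  (Halpha : 0 < alpha < PI) (Hz : x ^ 2 + y ^ 2 < 1) :
  let O1 := harm_meas_arc x y 0 alpha in
  let O2 := harm_meas_arc x y alpha PI in
  let O3 := harm_meas_arc x y PI (PI + alpha) in
  let O4 := harm_meas_arc x y (PI + alpha) (2 * PI) in
  let U := O1 + O3 in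
  let V := O1 - O3 in
  let T := O4 - O2 in
  sin (PI * O1) * sin (PI * O3) / (sin (PI * O2) * sin (PI * O4))
    = (tan (alpha / 2)) ^ 2
  /\
  sin (PI / 2 * (U + V)) * sin (PI / 2 * (U - V))
    / (sin (PI / 2 * (1 - U - T)) * sin (PI / 2 * (1 - U + T)))
    = (tan (alpha / 2)) ^ 2.
Proof.
  intros O1 O2 O3 O4 U V T.
  assert (Hc : 0 < cos (alpha/2)) by (apply cos_gt_0; lra).
  assert (H1 : sin (PI * O1) * sin (PI * O3) / (sin (PI * O2) * sin (PI * O4))
    = (tan (alpha / 2)) ^ 2).
  { unfold O1, O2, O3, O4. rewrite !sin_formula by exact Hz.
    rewrite Kf_2PI.
    replace ((alpha - 0)/2) with (alpha/2) by field.
    replace ((PI + alpha - PI)/2) with (alpha/2) by field.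
    replace ((PI - alpha)/2) with (PI/2 - alpha/2) by field.
    replace ((2*PI - (PI + alpha))/2) with (PI/2 - alpha/2) by field.
    rewrite sin_shift. unfold tan.
    pose proof (Kf_pos x y 0 Hz). pose proof (Kf_pos x y alpha Hz).
    pose proof (Kf_pos x y PI Hz). pose proof (Kf_pos x y (PI+alpha) Hz).
    field. repeat split; lra. }
  split; [exact H1|].
  assert (Hs : PI*O1 + PI*O2 + PI*O3 + PI*O4 = PI).
  { unfold O1, O2, O3, O4. rewrite !piO by exact Hz. rewrite qf_2PI. field. }
  unfold U, V, T. clearbody O1 O2 O3 O4.
  replace (PI / 2 * (O1 + O3 + (O1 - O3))) with (PI*O1) by field.
  replace (PI / 2 * (O1 + O3 - (O1 - O3))) with (PI*O3) by field.
  replace (PI / 2 * (1 - (O1 + O3) - (O4 - O2))) with (PI*O2)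
    by (transitivity (PI*O2 + (PI - (PI*O1 + PI*O2 + PI*O3 + PI*O4))/2); [rewrite Hs; field | field]).
  replace (PI / 2 * (1 - (O1 + O3) + (O4 - O2))) with (PI*O4)
    by (transitivity (PI*O4 + (PI - (PI*O1 + PI*O2 + PI*O3 + PI*O4))/2); [rewrite Hs; field | field]).
  exact H1.
Qed.
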